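(* Fix a social state $x\in\mathcal{X}$ and $i_0\in(0,1)$, and let $I(t)$ solve $$\dot I^d_i(t)=-\gamma I^d_i(t)+\lambda(1-s^d_i)\bigl(1-I^d_i(t)\bigr)d\,\Theta(t),\qquad \Theta(t)=\frac{\sum_{d}\sum_{i} d\,x^d_iI^d_i(t)}{\bar d},$$ with $I^d_i(0)=i_0$ for all $d,i$. Then for every $d\in\{1,\dots,D\}$ and all $i,j\in\{1,\dots,n^d\}$ with $i>j$ (so $s^d_i>s^d_j$), we have $I^d_i(t)<I^d_j(t)$ for all $t>0$.
   Context: Setting: $D\in\mathbb{N}_+$ populations indexed by degree $d\in\{1,\dots,D\}$, degree distribution $m^d\in[0,1]$, $\sum_dm^d=1$, $\bar d=\sum_d d\,m^d>0$. Population $d$ has strategies $0\le s^d_1<\dots<s^d_{n^d}\le1$ (strictly increasing). A social state is $x=(x^d_i)$ with $x^d_i\ge0$, $\sum_ix^d_i=m^d$; $\mathcal{X}$ is the set of social states. Constants $\lambda>0$, $\gamma>0$. *)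

(* Defs.v *)
From Stdlib Require Import Reals.
From Coquelicot Require Import Coquelicot.
Open Scope R_scope.

(* sumR n f = f 1 + f 2 + ... + f n  (indices start at 1, as in the paper) *)
Fixpoint sumR (n : nat) (f : nat -> R) : R :=
  match n with
  | O => 0
  | S k => sumR k f + f (S k)
  end.

Definition dbar (D : nat) (m : nat -> R) : R :=
  sumR D (fun d => INR d * m d).

Definition Theta (D : nat) (n : nat -> nat) (m : nat -> R)
  (x : nat -> nat -> R) (I : R -> nat -> nat -> R) (t : R) : R :=
  sumR D (fun d => sumR (n d) (fun i => INR d * x d i * I t d i)) / dbar D m.

Definition social_state (D : nat) (n : nat -> nat) (m : nat -> R)
  (x : nat -> nat -> R) : Prop :=
  (forall d i, (1 <= d <= D)%nat -> (1 <= i <= n d)%nat -> 0 <= x d i) /\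
  (forall d, (1 <= d <= D)%nat -> sumR (n d) (fun i => x d i) = m d).

(* Main.v *)
Require Import Defs.
From Stdlib Require Import Reals Lra Lia Classical.
From Coquelicot Require Import Coquelicot.
Open Scope R_scope.

Lemma sumR_ext N f g : (forall k, (1 <= k <= N)%nat -> f k = g k) -> sumR N f = sumR N g.
Proof. induction N; simpl; intros H; auto. rewrite IHN; [rewrite H; auto; lia|]. intros; apply H; lia. Qed.

Lemma sumR_le N f g : (forall k, (1 <= k <= N)%nat -> f k <= g k) -> sumR N f <= sumR N g.
Proof. induction N; simpl; intros H; [lra|]. assert (f (S N) <= g (S N)) by (apply H; lia).
  assert (sumR N f <= sumR N g) by (apply IHN; intros; apply H; lia). lra. Qed.

Lemma sumR_scal N c f : sumR N (fun k => c * f k) = c * sumR N f.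
Proof. induction N; simpl; [ring|]. rewrite IHN; ring. Qed.

Lemma sumR_nonneg N f : (forall k, (1 <= k <= N)%nat -> 0 <= f k) -> 0 <= sumR N f.
Proof. intros H. replace 0 with (sumR N (fun _ => 0)). apply sumR_le; auto.
  clear H; induction N; simpl; auto; rewrite IHN; ring. Qed.

Lemma sumR_pos N a c : (forall k, (1 <= k <= N)%nat -> 0 <= a k /\ 0 <= c k /\ (0 < a k -> 0 < c k)) ->
  0 < sumR N a -> 0 < sumR N c.
Proof. induction N; simpl; intros H Hs; [lra|].
  destruct (H (S N)) as [H1 [H2 H3]]; [lia|].
  assert (Hn: 0 <= sumR N a) by (apply sumR_nonneg; intros; apply H; lia).
  assert (Hc: 0 <= sumR N c) by (apply sumR_nonneg; intros; apply H; lia).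
  destruct (Rle_lt_dec (sumR N a) 0).
  - assert (0 < a (S N)) by lra. specialize (H3 H0). lra.
  - assert (0 < sumR N c) by (apply IHN; auto; intros; apply H; lia). lra. Qed.

Lemma filter_forall_nat {T} (F : (T -> Prop) -> Prop) {FF : Filter F} (N : nat) (P : nat -> T -> Prop) :
  (forall k, (1 <= k <= N)%nat -> F (P k)) -> F (fun t => forall k, (1 <= k <= N)%nat -> P k t).
Proof. induction N; intros H.
  - apply filter_imp with (fun _ => True); [intros; lia|apply filter_true].
  - apply filter_imp with (fun t => (forall k, (1 <= k <= N)%nat -> P k t) /\ P (S N) t).
    + intros t [H1 H2] k Hk. destruct (Nat.eq_dec k (S N)); [subst; auto|apply H1; lia].
    + apply filter_and; [apply IHN; intros; apply H; lia|apply H; lia]. Qed.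

Lemma at_right_ex P : at_right 0 P -> exists e, 0 < e /\ forall t, 0 < t < e -> P t.
Proof. intros [e He]. exists e; split; [apply cond_pos|]. intros t Ht. apply He; [|lra].
  change (Rabs (t - 0) < e). rewrite Rminus_0_r, Rabs_pos_eq; lra. Qed.

Lemma locally_ex x P : locally x P -> exists e, 0 < e /\ forall t, Rabs (t - x) < e -> P t.
Proof. intros [e He]. exists e; split; [apply cond_pos|]. intros t Ht. apply He. exact Ht. Qed.

Lemma loc01 y : 0 < y < 1 -> locally y (fun u => 0 < u < 1).
Proof. intros H. apply (open_and (fun u => 0 < u) (fun u => u < 1)); [apply open_gt|apply open_lt|exact H]. Qed.

Lemma deriv_cont f t l : is_derive f t l -> continuity_pt f t.
Proof. intros H. apply continuity_pt_filterlim. apply (ex_derive_continuous f t). exists l; exact H. Qed.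

Lemma deriv_left f c l a : is_derive f c l -> 0 < l -> a < c -> exists y, a < y < c /\ f y < f c.
Proof. intros H Hl Hac. apply is_derive_Reals in H. destruct (H l Hl) as [del Hd].
  set (h := - Rmin del (c - a) / 2).
  assert (Hm1: 0 < Rmin del (c-a)) by (apply Rmin_glb_lt; [apply cond_pos|lra]).
  assert (Hm2: Rmin del (c-a) <= del) by apply Rmin_l. assert (Hm3: Rmin del (c-a) <= c - a) by apply Rmin_r.
  assert (Hh: h < 0) by (unfold h; lra).
  specialize (Hd h ltac:(lra)). assert (Rabs h < del) by (rewrite Rabs_left; unfold h; lra).
  specialize (Hd H0). exists (c + h). split; [unfold h; lra|].
  apply Rabs_def2 in Hd. destruct Hd as [Hd1 Hd2].
  set (q := (f (c + h) - f c) / h) in *. assert (0 < q) by lra.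
  assert (f (c + h) - f c = q * h) by (unfold q; field; lra). nra. Qed.

Lemma barrier f f' : (forall t, 0 < t -> is_derive f t (f' t)) ->
  (forall t, 0 < t -> f t <= 0 -> 0 < f' t) ->
  (forall t1, 0 < t1 -> f t1 < 0 -> exists a, 0 < a < t1 /\ f t1 < f a) ->
  forall t, 0 < t -> 0 < f t.
Proof. intros Hd Hp Hl.
  assert (Hneg: forall t1, 0 < t1 -> ~ f t1 < 0).
  { intros t1 Ht1 Hf. destruct (Hl t1 Ht1 Hf) as [a [Ha Hfa]].
    destruct (continuity_ab_min f a t1) as [c [Hc1 Hc2]]; [lra|intros; eapply deriv_cont; apply Hd; lra|].
    assert (f c <= f t1) by (apply Hc1; lra).
    assert (a < c). { destruct (Rle_lt_or_eq_dec a c); [lra|auto|subst; lra]. }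
    destruct (deriv_left f c (f' c) a) as [y [Hy1 Hy2]]; [apply Hd; lra|apply Hp; lra|auto|].
    assert (f c <= f y) by (apply Hc1; lra). lra. }
  intros t Ht. destruct (Rtotal_order (f t) 0) as [H|[H|H]]; auto.
  - exfalso; apply (Hneg t Ht H).
  - destruct (deriv_left f t (f' t) 0) as [y [Hy1 Hy2]]; [apply Hd; lra|apply Hp; lra|auto|].
    exfalso; apply (Hneg y); lra. Qed.

Lemma deriv_expmul g gd c t : is_derive g t gd ->
  is_derive (fun u => exp (c * u) * g u) t (exp (c * t) * (c * g t + gd)).
Proof. intros H.
  assert (He: is_derive (fun u => exp (c * u)) t (c * exp (c * t))).
  { auto_derive; auto; ring. }
  pose proof (is_derive_mult _ _ t _ _ He H ltac:(intros; apply Rmult_comm)) as Hm.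
  replace (exp (c * t) * (c * g t + gd)) with (plus (mult (c * exp (c * t)) (g t)) (mult (exp (c * t)) gd)).
  exact Hm. unfold plus, mult; simpl. ring.
Qed.

Lemma gron g g' c T : (forall t, 0 < t -> is_derive g t (g' t)) -> 0 < T ->
  (forall t, 0 < t < T -> 0 <= c * g t + g' t) ->
  exp (c * (T/2)) * g (T/2) <= exp (c * T) * g T.
Proof. intros Hd HT Hp.
  set (h := fun u => exp (c * u) * g u).
  assert (Hh: forall t, 0 < t -> is_derive h t (exp (c * t) * (c * g t + g' t))).
  { intros; apply deriv_expmul; auto. }
  assert (Hmid: forall t, T/2 < t < T -> h (T/2) <= h t).
  { intros t Ht. destruct (MVT_gen h (T/2) t (fun u => exp (c * u) * (c * g u + g' u))) as [c0 [Hc0 Heq]].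
    - intros x Hx. rewrite Rmin_left, Rmax_right in Hx by lra. apply Hh; lra.
    - intros x Hx. rewrite Rmin_left, Rmax_right in Hx by lra. eapply deriv_cont; apply Hh; lra.
    - rewrite Rmin_left, Rmax_right in Hc0 by lra.
      assert (0 <= exp (c * c0) * (c * g c0 + g' c0)).
      { apply Rmult_le_pos; [left; apply exp_pos|apply Hp; lra]. }
      assert (0 <= exp (c * c0) * (c * g c0 + g' c0) * (t - T/2)) by (apply Rmult_le_pos; lra). lra. }
  change (h (T/2) <= h T).
  destruct (Rle_lt_dec (h (T/2)) (h T)) as [|Hlt]; auto. exfalso.
  assert (Hc: continuity_pt h T) by (eapply deriv_cont; apply Hh; lra).
  apply continuity_pt_filterlim in Hc.
  assert (Hl: locally T (fun t => h t < h (T/2))).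
  { apply (Hc (fun y => y < h (T/2))). apply (open_lt (h (T/2))). exact Hlt. }
  destruct (locally_ex _ _ Hl) as [e [He Hee]].
  set (t := Rmax (T/2 + T/4) (T - e/2)).
  assert (T/2 + T/4 <= t) by apply Rmax_l. assert (T - e/2 <= t) by apply Rmax_r.
  assert (t < T) by (unfold t; apply Rmax_lub_lt; lra).
  assert (h t < h (T/2)) by (apply Hee; rewrite Rabs_left; lra).
  assert (h (T/2) <= h t) by (apply Hmid; lra). lra.
Qed.

Lemma theta_bounds D n m x (I : R -> nat -> nat -> R) t : 0 < dbar D m -> social_state D n m x ->
  (forall d i, (1 <= d <= D)%nat -> (1 <= i <= n d)%nat -> 0 < I t d i < 1) ->
  0 < Theta D n m x I t <= 1.
Proof. intros Hdb [Hx0 Hxs] HG. unfold Theta.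
  assert (Hin: forall d, (1 <= d <= D)%nat ->
     0 <= sumR (n d) (fun i => INR d * x d i * I t d i) <= INR d * m d /\
     (0 < INR d * m d -> 0 < sumR (n d) (fun i => INR d * x d i * I t d i))).
  { intros d Hd. assert (HdR: 0 <= INR d) by apply pos_INR.
    assert (Hsum: sumR (n d) (fun i => INR d * x d i) = INR d * m d)
      by (rewrite sumR_scal, Hxs; auto).
    split; [split|].
    - apply sumR_nonneg. intros i Hi. specialize (Hx0 d i Hd Hi). specialize (HG d i Hd Hi).
      apply Rmult_le_pos; [apply Rmult_le_pos|]; lra.
    - rewrite <- Hsum. apply sumR_le. intros i Hi. specialize (Hx0 d i Hd Hi). specialize (HG d i Hd Hi).
      assert (0 <= INR d * x d i) by (apply Rmult_le_pos; lra). nra.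
    - intros Hp. rewrite <- Hsum in Hp. eapply sumR_pos; [|exact Hp].
      intros i Hi. specialize (Hx0 d i Hd Hi). specialize (HG d i Hd Hi).
      assert (0 <= INR d * x d i) by (apply Rmult_le_pos; lra).
      split; [auto|split; [nra|intros; nra]]. }
  assert (Hup: sumR D (fun d => sumR (n d) (fun i => INR d * x d i * I t d i)) <= dbar D m).
  { unfold dbar. apply sumR_le. intros; apply Hin; auto. }
  assert (Hpos: 0 < sumR D (fun d => sumR (n d) (fun i => INR d * x d i * I t d i))).
  { eapply sumR_pos; [|exact Hdb]. intros d Hd. destruct (Hin d Hd) as [[H1 H2] H3].
    split; [lra|split; auto]. }
  split. apply Rdiv_lt_0_compat; auto.
  apply Rmult_le_reg_r with (dbar D m); auto. unfold Rdiv. rewrite Rmult_assoc, Rinv_l by lra. lra.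
Qed.

Lemma invariance
  (D : nat) (m : nat -> R) (n : nat -> nat) (s : nat -> nat -> R)
  (lam gam i0 : R) (x : nat -> nat -> R) (I : R -> nat -> nat -> R)
  (Hdbar : 0 < dbar D m)
  (Hs01 : forall d i, (1 <= d <= D)%nat -> (1 <= i <= n d)%nat ->
            0 <= s d i <= 1)
  (Hlam : 0 < lam) (Hgam : 0 < gam)
  (Hx : social_state D n m x)
  (Hi0 : 0 < i0 < 1)
  (Hcont0 : forall d i, (1 <= d <= D)%nat -> (1 <= i <= n d)%nat ->
            filterlim (fun t => I t d i) (at_right 0) (locally i0))
  (Hode : forall d i t, (1 <= d <= D)%nat -> (1 <= i <= n d)%nat -> 0 < t ->
            is_derive (fun u => I u d i) t
              (- gam * I t d i
               + lam * (1 - s d i) * (1 - I t d i) * INR d * Theta D n m x I t)) :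
  forall t1, 0 < t1 -> forall d i, (1 <= d <= D)%nat -> (1 <= i <= n d)%nat -> 0 < I t1 d i < 1.
Proof.
  intros t1 Ht1.
  set (G := fun t => forall d i, (1 <= d <= D)%nat -> (1 <= i <= n d)%nat -> 0 < I t d i < 1).
  change (G t1).
  assert (H0: at_right 0 G).
  { unfold G; apply filter_imp with (fun t => forall d, (1 <= d <= D)%nat -> forall i, (1 <= i <= n d)%nat -> 0 < I t d i < 1).
    { intros t Ht d i Hd Hi; apply Ht; auto. }
    apply (filter_forall_nat (at_right 0) D (fun d t => forall i, (1 <= i <= n d)%nat -> 0 < I t d i < 1)). intros d Hd.
    apply (filter_forall_nat (at_right 0) (n d) (fun i t => 0 < I t d i < 1)). intros i Hi.
    apply (Hcont0 d i Hd Hi (fun y => 0 < y < 1)). apply loc01; auto. }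
  destruct (at_right_ex _ H0) as [e0 [He0 He0']].
  set (E := fun tau => 0 < tau <= t1 /\ forall t, 0 < t <= tau -> G t).
  assert (HE0: E (Rmin (e0/2) t1)).
  { assert (Rmin (e0/2) t1 <= e0/2) by apply Rmin_l. assert (Rmin (e0/2) t1 <= t1) by apply Rmin_r.
    assert (0 < Rmin (e0/2) t1) by (apply Rmin_glb_lt; lra).
    split; [lra|]. intros t Ht. apply He0'; lra. }
  destruct (completeness E) as [T [HTub HTlub]].
  { exists t1. intros y [Hy _]; lra. }
  { eexists; exact HE0. }
  assert (HTpos: 0 < T). { assert (Rmin (e0/2) t1 <= T) by (apply HTub; auto). destruct HE0; lra. }
  assert (HTle: T <= t1). { apply HTlub. intros y [Hy _]; lra. }
  assert (Hbelow: forall t, 0 < t < T -> G t).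
  { intros t Ht. apply NNPP. intros HnG.
    assert (T <= t); [|lra]. apply HTlub. intros tau [Htau Htau'].
    destruct (Rle_lt_dec tau t); auto. exfalso; apply HnG; apply Htau'; lra. }
  assert (HGT: G T).
  { intros d i Hd Hi. destruct (Hs01 d i Hd Hi) as [Hs0 Hs1].
    assert (HdR: 0 <= INR d) by apply pos_INR.
    split.
    - pose proof (gron (fun u => I u d i) _ gam T (fun t Ht => Hode d i t Hd Hi Ht) HTpos) as Hg.
      simpl in Hg. assert (Hc: forall t, 0 < t < T -> 0 <= gam * I t d i +
         (- gam * I t d i + lam * (1 - s d i) * (1 - I t d i) * INR d * Theta D n m x I t)).
      { intros t Ht. destruct (theta_bounds D n m x I t Hdbar Hx (Hbelow t Ht)) as [Th1 Th2].
        destruct (Hbelow t Ht d i Hd Hi) as [I1 I2].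
        assert (0 <= lam * (1 - s d i) * (1 - I t d i)) by (apply Rmult_le_pos; [apply Rmult_le_pos|]; lra).
        assert (0 <= lam * (1 - s d i) * (1 - I t d i) * INR d) by (apply Rmult_le_pos; lra).
        assert (0 <= lam * (1 - s d i) * (1 - I t d i) * INR d * Theta D n m x I t) by (apply Rmult_le_pos; lra).
        lra. }
      specialize (Hg Hc). destruct (Hbelow (T/2) ltac:(lra) d i Hd Hi) as [J1 J2].
      assert (0 < exp (gam * (T/2)) * I (T/2) d i) by (apply Rmult_lt_0_compat; [apply exp_pos|lra]).
      pose proof (exp_pos (gam * T)).
      destruct (Rle_lt_dec (I T d i) 0); [|auto]. assert (exp (gam * T) * I T d i <= 0) by nra. lra.
    - assert (Hd1: forall t, 0 < t -> is_derive (fun u => 1 - I u d i) t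
         (- (- gam * I t d i + lam * (1 - s d i) * (1 - I t d i) * INR d * Theta D n m x I t))).
      { intros t Ht. pose proof (is_derive_minus (fun _ => 1) (fun u => I u d i) t 0 _
          (is_derive_const 1 t) (Hode d i t Hd Hi Ht)) as Hm.
        unfold minus, plus, opp, zero in Hm; simpl in Hm.
        replace (- (- gam * I t d i + lam * (1 - s d i) * (1 - I t d i) * INR d * Theta D n m x I t))
          with (0 + - (- gam * I t d i + lam * (1 - s d i) * (1 - I t d i) * INR d * Theta D n m x I t)) by ring.
        exact Hm. }
      pose proof (gron (fun u => 1 - I u d i) _ (lam * INR d) T Hd1 HTpos) as Hg.
      simpl in Hg. assert (Hc: forall t, 0 < t < T -> 0 <= lam * INR d * (1 - I t d i) +
         - (- gam * I t d i + lam * (1 - s d i) * (1 - I t d i) * INR d * Theta D n m x I t)).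
      { intros t Ht. destruct (theta_bounds D n m x I t Hdbar Hx (Hbelow t Ht)) as [Th1 Th2].
        destruct (Hbelow t Ht d i Hd Hi) as [I1 I2].
        assert (HK: 0 <= lam * INR d * (1 - I t d i)) by (apply Rmult_le_pos; [apply Rmult_le_pos|]; lra).
        assert (0 <= (1 - s d i) * Theta D n m x I t <= 1) by (split; nra).
        replace (lam * INR d * (1 - I t d i) +
          - (- gam * I t d i + lam * (1 - s d i) * (1 - I t d i) * INR d * Theta D n m x I t))
          with (lam * INR d * (1 - I t d i) * (1 - (1 - s d i) * Theta D n m x I t) + gam * I t d i) by ring.
        assert (0 <= lam * INR d * (1 - I t d i) * (1 - (1 - s d i) * Theta D n m x I t)) by (apply Rmult_le_pos; lra).
        nra. }
      specialize (Hg Hc). destruct (Hbelow (T/2) ltac:(lra) d i Hd Hi) as [J1 J2].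
      assert (0 < exp (lam * INR d * (T/2)) * (1 - I (T/2) d i)) by (apply Rmult_lt_0_compat; [apply exp_pos|lra]).
      pose proof (exp_pos (lam * INR d * T)).
      destruct (Rle_lt_dec 1 (I T d i)); [|auto]. assert (exp (lam * INR d * T) * (1 - I T d i) <= 0) by nra. lra. }
  destruct (Req_dec T t1) as [<-|Hne]; auto. exfalso.
  assert (HL: locally T G).
  { unfold G; apply filter_imp with (fun t => forall d, (1 <= d <= D)%nat -> forall i, (1 <= i <= n d)%nat -> 0 < I t d i < 1).
    { intros t Ht d i Hd Hi; apply Ht; auto. }
    apply (filter_forall_nat (locally T) D (fun d t => forall i, (1 <= i <= n d)%nat -> 0 < I t d i < 1)). intros d Hd.
    apply (filter_forall_nat (locally T) (n d) (fun i t => 0 < I t d i < 1)). intros i Hi.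
    assert (Hc: continuity_pt (fun u => I u d i) T) by (eapply deriv_cont; apply Hode; auto).
    apply continuity_pt_filterlim in Hc.
    apply (Hc (fun y => 0 < y < 1)). apply loc01; auto. }
  destruct (locally_ex _ _ HL) as [e [He He']].
  set (tau := Rmin (T + e/2) t1).
  assert (tau <= T + e/2) by apply Rmin_l. assert (tau <= t1) by apply Rmin_r.
  assert (T < tau) by (apply Rmin_glb_lt; lra).
  assert (E tau).
  { split; [lra|]. intros t Ht. destruct (Rlt_le_dec t T). apply Hbelow; lra.
    apply He'. rewrite Rabs_pos_eq; lra. }
  assert (tau <= T) by (apply HTub; auto). lra.
Qed.

Theorem mainTheorem6
  (D : nat) (m : nat -> R) (n : nat -> nat) (s : nat -> nat -> R)
  (lam gam i0 : R) (x : nat -> nat -> R) (I : R -> nat -> nat -> R)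
  (HD : (1 <= D)%nat)
  (Hm : forall d, (1 <= d <= D)%nat -> 0 <= m d <= 1)
  (Hmsum : sumR D m = 1)
  (Hdbar : 0 < dbar D m)
  (Hn : forall d, (1 <= d <= D)%nat -> (1 <= n d)%nat)
  (Hs01 : forall d i, (1 <= d <= D)%nat -> (1 <= i <= n d)%nat ->
            0 <= s d i <= 1)
  (Hsinc : forall d i j, (1 <= d <= D)%nat -> (1 <= j)%nat -> (j < i)%nat ->
            (i <= n d)%nat -> s d j < s d i)
  (Hlam : 0 < lam) (Hgam : 0 < gam)
  (Hx : social_state D n m x)
  (Hi0 : 0 < i0 < 1)
  (Hinit : forall d i, (1 <= d <= D)%nat -> (1 <= i <= n d)%nat -> I 0 d i = i0)
  (Hcont0 : forall d i, (1 <= d <= D)%nat -> (1 <= i <= n d)%nat ->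
            filterlim (fun t => I t d i) (at_right 0) (locally i0))
  (Hode : forall d i t, (1 <= d <= D)%nat -> (1 <= i <= n d)%nat -> 0 < t ->
            is_derive (fun u => I u d i) t
              (- gam * I t d i
               + lam * (1 - s d i) * (1 - I t d i) * INR d * Theta D n m x I t)) :
  forall d i j t, (1 <= d <= D)%nat -> (1 <= j)%nat -> (j < i)%nat ->
    (i <= n d)%nat -> 0 < t -> I t d i < I t d j.
Proof.
  intros d i j t Hd Hj Hji Hin Ht.
  assert (Hi: (1 <= i <= n d)%nat) by lia. assert (Hj': (1 <= j <= n d)%nat) by lia.
  pose proof (invariance D m n s lam gam i0 x I Hdbar Hs01 Hlam Hgam Hx Hi0 Hcont0 Hode) as Hinv.
  set (rhs := fun k u => - gam * I u d k + lam * (1 - s d k) * (1 - I u d k) * INR d * Theta D n m x I u).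
  cut (0 < I t d j - I t d i); [lra|].
  apply (barrier (fun u => I u d j - I u d i) (fun u => rhs j u - rhs i u)); auto.
  - intros u Hu. pose proof (is_derive_minus _ _ u _ _ (Hode d j u Hd Hj' Hu) (Hode d i u Hd Hi Hu)) as Hm'.
    unfold minus, plus, opp in Hm'; simpl in Hm'. exact Hm'.
  - intros u Hu Hf. unfold rhs.
    destruct (Hinv u Hu d i Hd Hi) as [Ii1 Ii2]. destruct (Hinv u Hu d j Hd Hj') as [Ij1 Ij2].
    destruct (theta_bounds D n m x I u Hdbar Hx (Hinv u Hu)) as [Th1 Th2].
    pose proof (Hsinc d i j Hd Hj Hji Hin) as Hs. destruct (Hs01 d j Hd Hj') as [Hsj0 Hsj1].
    assert (HdR: 1 <= INR d) by (apply (le_INR 1); lia).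
    set (K := lam * INR d * Theta D n m x I u).
    assert (HK: 0 < K) by (unfold K; apply Rmult_lt_0_compat; [apply Rmult_lt_0_compat|]; lra).
    replace (- gam * I u d j + lam * (1 - s d j) * (1 - I u d j) * INR d * Theta D n m x I u -
      (- gam * I u d i + lam * (1 - s d i) * (1 - I u d i) * INR d * Theta D n m x I u))
      with (gam * (I u d i - I u d j) + K * ((1 - s d j) * (I u d i - I u d j) + (s d i - s d j) * (1 - I u d i)))
      by (unfold K; ring).
    assert (0 <= (1 - s d j) * (I u d i - I u d j)) by (apply Rmult_le_pos; lra).
    assert (0 < (s d i - s d j) * (1 - I u d i)) by (apply Rmult_lt_0_compat; lra).
    assert (0 < K * ((1 - s d j) * (I u d i - I u d j) + (s d i - s d j) * (1 - I u d i))) by (apply Rmult_lt_0_compat; lra).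
    nra.
  - intros t1 Ht1 Hf. set (e := - (I t1 d j - I t1 d i) / 2).
    assert (He: 0 < e) by (unfold e; lra).
    assert (HF: at_right 0 (fun u => i0 - e < I u d j /\ I u d i < i0 + e)).
    { apply filter_and.
      - apply (Hcont0 d j Hd Hj' (fun y => i0 - e < y)). apply open_gt. lra.
      - apply (Hcont0 d i Hd Hi (fun y => y < i0 + e)). apply open_lt. lra. }
    destruct (at_right_ex _ HF) as [e1 [He1 He1']].
    set (a := Rmin (e1/2) (t1/2)).
    assert (a <= e1/2) by apply Rmin_l. assert (a <= t1/2) by apply Rmin_r.
    assert (0 < a) by (apply Rmin_glb_lt; lra).
    exists a. split; [lra|]. destruct (He1' a ltac:(lra)). unfold e in *. lra.
Qed.
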